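(* Let $c$ be a Coxeter element. Define $\alpha\mapsto\overline{\alpha}$ from $\Phi_{\mathrm{ap}}(c)$ to $\Phi_{\mathrm{ap}}(c^{-1})$ by $\overline{-\beta_i^c}:=-\beta_i^{c^{-1}}$ for $i\in I$ and $\overline{\alpha}:=\alpha$ otherwise. Then for all $\alpha,\gamma\in\Phi_{\mathrm{ap}}(c)$, $(\alpha||\gamma)_c=(\overline\alpha||\overline\gamma)_{c^{-1}}$.
   Context: Let $I$ be a finite type Dynkin diagram with root system $\Phi$, positive roots $\Phi_+$, simple roots $\alpha_i$, Weyl group $W$ with simple reflections $s_i$. A Coxeter element $c$ is a product of all $s_i$, each once (then $c^{-1}$ is also a Coxeter element). For a reduced expression $c=s_{i_1}\cdots s_{i_n}$ put $\beta^c_{i_k}:=s_{i_n}\cdots s_{i_{k+1}}\alpha_{i_k}$. $\Phi_{\mathrm{ap}}(c):=\Phi_+\cup\{-\beta_i^c\}_{i\in I}$. $\tau_c:\Phi_{\mathrm{ap}}(c)\to\Phi_{\mathrm{ap}}(c)$ is $\tau_c(\beta_i^c)=-\beta_i^c$, $\tau_c(\alpha)=c\alpha$ otherwise. With $[\gamma;\alpha_i]$ the coefficient of $\alpha_i$ in $\gamma$ and $[x]_+=\max\{x,0\}$, $(\bullet||\bullet)_c$ is the unique $\tau_c$-invariant function on $\Phi_{\mathrm{ap}}(c)^2$ with $(-\beta_i^c||\alpha)_c=[\alpha;\alpha_i]_+$; similarly for $c^{-1}$. *)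

(* Defs.v *)
From HB Require Import structures.
From mathcomp Require Import all_boot all_order all_algebra.
Set Implicit Arguments. Unset Strict Implicit. Unset Printing Implicit Defensive.
Import Order.TTheory GRing.Theory Num.Theory.
Local Open Scope ring_scope.

(* Index set I = 'I_n.  Roots are encoded by their coefficient vectors in the
   basis of simple roots: gamma = \sum_i gamma 0 i * alpha_i. *)

(* A (generalized) Cartan matrix A, A i j = <alpha_i^vee, alpha_j>. *)
Definition is_cartan (n : nat) (A : 'M[int]_n) : Prop :=
  (forall i, A i i = 2) /\
  (forall i j, i != j -> A i j <= 0) /\
  (forall i j, A i j = 0 <-> A j i = 0).

(* Finite type: symmetrizable with positive definite symmetrization
   (equivalently, the Dynkin diagram is a finite type Dynkin diagram). *)
Definition finite_type_cartan (n : nat) (A : 'M[int]_n) : Prop :=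
  is_cartan A /\
  exists d : 'I_n -> rat,
    (forall i, 0 < d i) /\
    (forall i j, d i * (A i j)%:~R = d j * (A j i)%:~R) /\
    (forall x : 'rV[rat]_n, x != 0 ->
       0 < \sum_i \sum_j x 0 i * (d i * (A i j)%:~R) * x 0 j).

Definition sroot (n : nat) (i : 'I_n) : 'rV[int]_n := delta_mx 0 i.

Definition coef (n : nat) (g : 'rV[int]_n) (i : 'I_n) : int := g 0 i.

Definition sref (n : nat) (A : 'M[int]_n) (i : 'I_n) (v : 'rV[int]_n)
  : 'rV[int]_n :=
  v - (\sum_j A i j * v 0 j) *: sroot i.

Definition wact (n : nat) (A : 'M[int]_n) (w : seq 'I_n) (v : 'rV[int]_n)
  : 'rV[int]_n :=
  foldr (fun i u => sref A i u) v w.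

Definition is_root (n : nat) (A : 'M[int]_n) (v : 'rV[int]_n) : Prop :=
  exists (w : seq 'I_n) (i : 'I_n), v = wact A w (sroot i).

Definition is_pos_root (n : nat) (A : 'M[int]_n) (v : 'rV[int]_n) : Prop :=
  is_root A v /\ forall i, 0 <= v 0 i.

(* A Coxeter element c is given by a reduced expression
   c = s_{i_1} ... s_{i_n}, i.e. a list [:: i_1; ...; i_n] using every
   index exactly once. *)
Definition coxeter_word (n : nat) (l : seq 'I_n) : Prop :=
  perm_eq l (enum 'I_n).

Definition cox (n : nat) (A : 'M[int]_n) (l : seq 'I_n) (v : 'rV[int]_n) :=
  wact A l v.

(* beta^c_{i_k} = s_{i_n} ... s_{i_{k+1}} alpha_{i_k} *)
Definition beta (n : nat) (A : 'M[int]_n) (l : seq 'I_n) (i : 'I_n)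
  : 'rV[int]_n :=
  wact A (rev (drop (index i l).+1 l)) (sroot i).

Definition in_Phi_ap (n : nat) (A : 'M[int]_n) (l : seq 'I_n)
  (a : 'rV[int]_n) : Prop :=
  is_pos_root A a \/ exists i, a = - beta A l i.

Definition tau (n : nat) (A : 'M[int]_n) (l : seq 'I_n) (a : 'rV[int]_n)
  : 'rV[int]_n :=
  if [pick i | a == beta A l i] is Some i then - beta A l i else cox A l a.

Definition posp (x : int) : int := Num.max x 0.

(* f is "(. || .)_c": tau_c-invariant on Phi_ap(c)^2 and
   (-beta_i^c || alpha)_c = [alpha ; alpha_i]_+ for alpha in Phi_ap(c). *)
Definition is_pairing_c (n : nat) (A : 'M[int]_n) (l : seq 'I_n)
  (f : 'rV[int]_n -> 'rV[int]_n -> int) : Prop :=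
  (forall a g, in_Phi_ap A l a -> in_Phi_ap A l g ->
      f (tau A l a) (tau A l g) = f a g) /\
  (forall i a, in_Phi_ap A l a -> f (- beta A l i) a = posp (coef a i)).

(* the map alpha |-> overline alpha from Phi_ap(c) to Phi_ap(c^{-1});
   c^{-1} = s_{i_n} ... s_{i_1} has reduced expression rev l. *)
Definition bar (n : nat) (A : 'M[int]_n) (l : seq 'I_n) (a : 'rV[int]_n)
  : 'rV[int]_n :=
  if [pick i | a == - beta A l i] is Some i then - beta A (rev l) i else a.

(* Main.v *)
Require Import Defs.
From HB Require Import structures.
From mathcomp Require Import all_boot all_order all_algebra.
From mathcomp Require Import ring lra zify.
From Stdlib Require Import Classical_Prop.
Set Implicit Arguments. Unset Strict Implicit. Unset Printing Implicit Defensive.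
Import Order.TTheory GRing.Theory Num.Theory.
Local Open Scope ring_scope.

Section IntLayer.
Variable n : nat.
Variable A : 'M[int]_n.

Definition cz (v : 'rV[int]_n) (i : 'I_n) : int := \sum_j A i j * v 0 j.

Lemma srefE i v k : (sref A i v) 0 k = v 0 k - (k == i)%:R * cz v i.
Proof.
rewrite /sref /sroot !mxE eqxx /=. by rewrite mulrC.
Qed.

Lemma sref_out i v k : k != i -> (sref A i v) 0 k = v 0 k.
Proof. by move=> /negbTE H; rewrite srefE H mul0r subr0. Qed.

Lemma wact_out w v k : k \notin w -> (wact A w v) 0 k = v 0 k.
Proof.
elim: w => [|j w IH] //=; rewrite in_cons negb_or => /andP[Hkj Hkw].
by rewrite sref_out // IH.
Qed.

Lemma sref_neg i v : sref A i (- v) = - sref A i v.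
Proof.
apply/matrixP => a b; rewrite (ord1 a) [RHS]mxE !srefE /cz !mxE.
under eq_bigr do rewrite mxE mulrN. rewrite sumrN. ring.
Qed.

Lemma wact_neg w v : wact A w (- v) = - wact A w v.
Proof. by elim: w => [|j w IH] //=; rewrite IH sref_neg. Qed.

Lemma sum_delta (R : comNzRingType) (F : 'I_n -> R) i :
  \sum_j F j * (j == i)%:R = F i.
Proof.
rewrite (bigD1 i) //= eqxx mulr1 big1 ?addr0 // => j /negbTE ->; by rewrite mulr0.
Qed.

Lemma sum_deltal (R : comNzRingType) (F : 'I_n -> R) i :
  \sum_j (j == i)%:R * F j = F i.
Proof. rewrite -(sum_delta F i); apply: eq_bigr => j _; exact: mulrC. Qed.

Variable HAd : forall i, A i i = 2.

Lemma cz_sref i v : cz (sref A i v) i = - cz v i.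
Proof.
rewrite {1}/cz; under eq_bigr do rewrite srefE mulrBr.
rewrite sumrB.
have -> : \sum_j A i j * ((j == i)%:R * cz v i) = A i i * cz v i.
  under eq_bigr do rewrite mulrCA. by rewrite sum_deltal.
rewrite -/(cz v i) HAd; ring.
Qed.

Lemma sref_invol i v : sref A i (sref A i v) = v.
Proof.
apply/matrixP => a b; rewrite (ord1 a) !srefE cz_sref; ring.
Qed.

Lemma wact_cat w1 w2 v : wact A (w1 ++ w2) v = wact A w1 (wact A w2 v).
Proof. by rewrite /wact foldr_cat. Qed.

Lemma wact_revK w v : wact A (rev w) (wact A w v) = v.
Proof.
elim: w v => [|j w IH] v //=.
by rewrite rev_cons -cats1 wact_cat /= sref_invol IH.
Qed.

Lemma wactK_rev w v : wact A w (wact A (rev w) v) = v.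
Proof. by rewrite -{1}(revK w) wact_revK. Qed.


Variable d : 'I_n -> rat.
Hypothesis dpos : forall i, 0 < d i.
Hypothesis dsym : forall i j, d i * (A i j)%:~R = d j * (A j i)%:~R.
Hypothesis Aoff : forall i j, i != j -> A i j <= 0.
Hypothesis posdef : forall x : 'rV[rat]_n, x != 0 ->
       0 < \sum_i \sum_j x 0 i * (d i * (A i j)%:~R) * x 0 j.

Definition toQ (v : 'rV[int]_n) : 'rV[rat]_n := map_mx (fun z : int => z%:~R) v.
Definition DA : 'M[rat]_n := \matrix_(i, j) (d i * (A i j)%:~R).
Definition coro (v : 'rV[rat]_n) i := \sum_j (A i j)%:~R * v 0 j.
Definition RQ i : 'M[rat]_n :=
  1%:M - \matrix_(j, k) ((A i j)%:~R * (k == i)%:R).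

Lemma RQE v i k : (v *m RQ i) 0 k = v 0 k - (k == i)%:R * coro v i.
Proof.
rewrite /RQ mulmxBr mulmx1 !mxE; congr (_ - _).
rewrite /coro mulr_sumr; apply: eq_bigr => j _; rewrite mxE; ring.
Qed.

Lemma toQ_cz v i : (cz v i)%:~R = coro (toQ v) i.
Proof.
rewrite /cz /coro rmorph_sum; apply: eq_bigr => j _; by rewrite rmorphM /= mxE.
Qed.

Lemma toQ_sref i v : toQ (sref A i v) = toQ v *m RQ i.
Proof.
apply/matrixP => a b; rewrite (ord1 a) RQE mxE srefE rmorphB rmorphM /= toQ_cz.
by rewrite mxE; case: (b == i).
Qed.

Definition WQ (w : seq 'I_n) : 'M[rat]_n := foldr (fun i M => M *m RQ i) 1%:M w.

Lemma toQ_wact w v : toQ (wact A w v) = toQ v *m WQ w.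
Proof.
elim: w => [|i w IH] /=; first by rewrite mulmx1.
by rewrite toQ_sref IH mulmxA.
Qed.

Lemma WQ_out w (x : 'rV[rat]_n) k : k \notin w -> (x *m WQ w) 0 k = x 0 k.
Proof.
elim: w => [|j w IH] /=; first by rewrite mulmx1.
rewrite in_cons negb_or => /andP[Hkj Hkw].
by rewrite mulmxA RQE (negbTE Hkj) mul0r subr0 IH.
Qed.

Definition B (x y : 'rV[rat]_n) : rat := (x *m DA *m y^T) 0 0.

Lemma Bsum x y : B x y = \sum_i \sum_j x 0 i * (d i * (A i j)%:~R) * y 0 j.
Proof.
rewrite /B mxE exchange_big /=; apply: eq_bigr => j _.
rewrite !mxE mulr_suml; apply: eq_bigr => i _; by rewrite !mxE.
Qed.

Lemma BDl x y z : B (x + y) z = B x z + B y z.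
Proof. by rewrite /B !mulmxDl mxE. Qed.

Lemma BZl a x z : B (a *: x) z = a * B x z.
Proof. by rewrite /B -!scalemxAl mxE. Qed.

Lemma BC x y : B x y = B y x.
Proof.
rewrite !Bsum exchange_big /=; apply: eq_bigr => i _; apply: eq_bigr => j _.
rewrite dsym; ring.
Qed.

Lemma BNl x z : B (- x) z = - B x z.
Proof. by rewrite -scaleN1r BZl mulN1r. Qed.

Lemma BBl x y z : B (x - y) z = B x z - B y z.
Proof. by rewrite BDl BNl. Qed.

Lemma BDr x y z : B z (x + y) = B z x + B z y.
Proof. by rewrite BC BDl !(BC z). Qed.
Lemma BZr a x z : B z (a *: x) = a * B z x.
Proof. by rewrite BC BZl (BC z). Qed.
Lemma BBr x y z : B z (x - y) = B z x - B z y.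
Proof. by rewrite BC BBl !(BC z). Qed.

Definition ev i : 'rV[rat]_n := delta_mx 0 i.

Lemma Bev i v : B (ev i) v = d i * coro v i.
Proof.
rewrite Bsum (bigD1 i) //= [X in _ + X]big1 ?addr0; last first.
  move=> j Hj; apply: big1 => k _; by rewrite !mxE (negbTE Hj) /= !mul0r.
rewrite /coro mulr_sumr; apply: eq_bigr => k _; rewrite !mxE !eqxx /=; ring.
Qed.

Lemma coro_ev i : coro (ev i) i = 2.
Proof.
rewrite /coro (bigD1 i) //= [X in _ + X]big1 ?addr0; last first.
  move=> j Hj; by rewrite !mxE (negbTE Hj) /= mulr0.
by rewrite !mxE !eqxx /= HAd mulr1.
Qed.

Lemma RQ_ev v i : v *m RQ i = v - coro v i *: ev i.
Proof.
apply/matrixP => a b; rewrite (ord1 a) RQE !mxE /=; case: (b == i) => /=; ring.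
Qed.

Lemma B_RQ v i : B (v *m RQ i) (v *m RQ i) = B v v.
Proof.
rewrite RQ_ev BBl !BBr !BZl !BZr (BC v (ev i)) !Bev coro_ev; ring.
Qed.

Lemma B_WQ v w : B (v *m WQ w) (v *m WQ w) = B v v.
Proof. elim: w => [|i w IH] /=; first by rewrite mulmx1. by rewrite mulmxA B_RQ. Qed.

Lemma B_ge0 x : 0 <= B x x.
Proof.
have [->|Hx] := eqVneq x 0; first by rewrite /B !mul0mx mxE.
by apply: ltW; rewrite Bsum; exact: posdef.
Qed.

Lemma B_eq0 x : B x x = 0 -> x = 0.
Proof.
move=> H; apply/eqP; apply: contraT => Hx.
by have := posdef Hx; rewrite -Bsum H ltxx.
Qed.

Lemma fixed_coro w (x : 'rV[rat]_n) : uniq w -> x *m WQ w = x ->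
  forall i, i \in w -> coro x i = 0.
Proof.
elim: w => [|j w IH] //= /andP[Hjw Hu]; rewrite mulmxA => H.
set y := x *m WQ w in H.
have Hc : coro y j = 0.
  have := congr1 (fun M : 'rV_n => M 0 j) H; rewrite /= RQE eqxx mul1r /y WQ_out //.
  move=> /eqP; rewrite subr_eq addrC -subr_eq subrr => /eqP <-; done.
have Hy : y = x by rewrite -H RQ_ev Hc scale0r subr0.
move=> i; rewrite in_cons => /orP[/eqP ->|Hi]; first by rewrite -Hy.
exact: IH.
Qed.

Variable l : seq 'I_n.
Hypothesis ul : uniq l.
Hypothesis hl : forall i, i \in l.

Lemma fixed_zero (x : 'rV[rat]_n) : x *m WQ l = x -> x = 0.
Proof.
move=> H; apply: B_eq0; rewrite Bsum; apply: big1 => i _.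
have := fixed_coro ul H (hl i); rewrite /coro => Hc.
transitivity (x 0 i * d i * \sum_j (A i j)%:~R * x 0 j); last by rewrite Hc mulr0.
rewrite mulr_sumr; apply: eq_bigr => j _; ring.
Qed.

Definition Mc : 'M[rat]_n := (WQ l - 1%:M) *m DA.

Lemma Mc_unit : Mc \in unitmx.
Proof.
rewrite -row_free_unit; apply: inj_row_free => v Hv.
set y := v *m (WQ l - 1%:M).
have Hy : y = 0.
  apply: B_eq0; by rewrite /B /y -(mulmxA v _ DA) -/Mc Hv mul0mx mxE.
apply: fixed_zero; apply/eqP; rewrite -subr_eq0; apply/eqP.
by rewrite -[v in _ - v]mulmx1 -mulmxBr.
Qed.

Definition wv : 'rV[rat]_n := (invmx Mc *m const_mx 1)^T.

Lemma wv_prop (x : 'rV[rat]_n) : B (x *m WQ l - x) wv = \sum_j x 0 j.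
Proof.
rewrite /B /wv trmxK.
have -> : (x *m WQ l - x) *m DA = x *m Mc by rewrite /Mc mulmxA mulmxBr mulmx1.
rewrite !mulmxA -(mulmxA x _ DA) -/Mc mulmxK ?Mc_unit // mxE.
by apply: eq_bigr => j _; rewrite mxE mulr1.
Qed.

Lemma B0r z : B z 0 = 0.
Proof. by rewrite /B trmx0 mulmx0 mxE. Qed.

Lemma CS v w : B v w ^+ 2 <= B v v * B w w.
Proof.
have [Hw|Hw] := eqVneq (B w w) 0.
  by rewrite (B_eq0 Hw) !B0r expr0n /= mulr0.
have Hpos : 0 < B w w by rewrite lt_def Hw B_ge0.
set t := B v w / B w w.
have E : B (v - t *: w) (v - t *: w) * B w w = B v v * B w w - B v w ^+ 2.
  rewrite BBl !BBr !BZl !BZr (BC w v) /t; field; exact: Hw.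
have := mulr_ge0 (B_ge0 (v - t *: w)) (ltW Hpos); by rewrite E subr_ge0.
Qed.

Lemma sref0 i : sref A i 0 = 0.
Proof.
apply/matrixP => a b; rewrite (ord1 a) srefE /cz big1 ?mulr0 ?mxE ?subr0 // => j _.
by rewrite mxE mulr0.
Qed.

Lemma wact0 w : wact A w 0 = 0.
Proof. by elim: w => [|i w IH] //=; rewrite IH sref0. Qed.

Lemma iter_c_neq0 (a : 'rV[int]_n) m : a != 0 -> iter m (wact A l) a != 0.
Proof.
move=> Ha; elim: m => [|m IH] //=; apply: contra IH => /eqP H.
by rewrite -(wact_revK l (iter m (wact A l) a)) H wact0.
Qed.

Lemma sum_ge1 (x : 'rV[int]_n) : x != 0 -> (forall j, 0 <= x 0 j) ->
  1 <= \sum_j (toQ x) 0 j.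
Proof.
move=> Hx Hp.
have [j Hj] : exists j, x 0 j != 0.
  apply/existsP; apply: contraR Hx; rewrite negb_exists => /forallP H.
  apply/eqP/matrixP => a b; rewrite (ord1 a) mxE; exact/eqP/negPn/H.
rewrite (bigD1 j) //= -[1]addr0; apply: lerD.
  rewrite mxE ler1z; have := Hp j; lia.
by apply: sumr_ge0 => k _; rewrite mxE ler0z.
Qed.

Lemma orbit_bound (a : 'rV[int]_n) : a != 0 ->
  ~ (forall m j, 0 <= (iter m (wact A l) a) 0 j).
Proof.
move=> Ha Hall.
pose am m := toQ (iter m (wact A l) a).
have amS m : am m.+1 = am m *m WQ l by rewrite /am /= toQ_wact.
have amB m : B (am m) (am m) = B (am 0) (am 0).
  by elim: m => [|m IH] //; rewrite amS B_WQ.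
pose S N := \sum_(0 <= m < N) am m.
have SW N : S N *m WQ l - S N = am N - am 0.
  rewrite /S mulmx_suml -sumrB.
  under eq_bigr do rewrite -amS.
  by rewrite telescope_sumr.
have Ssum N : N%:R <= B (am N - am 0) wv.
  rewrite -SW wv_prop /S.
  have -> : \sum_j (\sum_(0 <= m < N) am m) 0 j = \sum_(0 <= m < N) \sum_j am m 0 j.
    rewrite exchange_big /=; apply: eq_bigr => j _; by rewrite summxE.
  have -> : N%:R = \sum_(0 <= m < N) (1:rat) by rewrite sumr_const_nat subn0.
  apply: ler_sum => m _.
  exact: sum_ge1 (iter_c_neq0 m Ha) (Hall m).
set K := B (am 0) (am 0) * B wv wv.
have Hb N : B (am N) wv <= 1 + K.
  have Hcs := CS (am N) wv; rewrite amB -/K in Hcs.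
  have [Ht|Ht] := lerP (B (am N) wv) 1.
    apply: (le_trans Ht); rewrite lerDl /K; apply: mulr_ge0; exact: B_ge0.
  apply: (@le_trans _ _ K); last by rewrite lerDr.
  apply: le_trans Hcs.
  by rewrite expr2 ler_peMl // ltW // (lt_trans ltr01 Ht).
set C := 1 + K - B (am 0) wv.
pose N := Num.bound `|C|.
have HN : C < N%:R.
  apply: le_lt_trans (ler_norm C) _; exact: archi_boundP.
have := Ssum N; rewrite BBl => H1.
have := le_trans H1 (lerB (Hb N) (lexx (B (am 0) wv))).
by rewrite -/C leNgt HN.
Qed.

Definition rootlike (x : 'rV[int]_n) := exists i, B (toQ x) (toQ x) = 2 * d i /\
  forall j, ((x 0 j)%:~R * d j / d i) \is a Num.int.

Lemma dneq0 i : d i != 0.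
Proof. by rewrite gt_eqF // dpos. Qed.

Lemma toQ_sroot i : toQ (sroot i) = ev i.
Proof. by apply/matrixP => a b; rewrite !mxE; case: (_ && _). Qed.

Lemma rootlike_sroot i : rootlike (sroot i).
Proof.
exists i; split; first by rewrite toQ_sroot Bev coro_ev mulrC.
move=> j; rewrite /sroot mxE /=; case: eqP => [->|_] /=.
  by rewrite mul1r mulfV ?dneq0 // int_num1.
by rewrite !mul0r int_num0.
Qed.

Lemma rootlike_sref m x : rootlike x -> rootlike (sref A m x).
Proof.
move=> [i [HB Hi]]; exists i; split; first by rewrite toQ_sref B_RQ.
move=> j; rewrite srefE.
have [->|Hjm] := eqVneq j m; last by rewrite mul0r subr0; exact: Hi.
rewrite mul1r.
have -> : (x 0 m - cz x m)%:~R * d m / d i = (x 0 m)%:~R * d m / d i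
   - \sum_k (A k m)%:~R * ((x 0 k)%:~R * d k / d i).
  rewrite rmorphB /= /cz rmorph_sum /= !mulrBl; congr (_ - _).
  rewrite !mulr_suml; apply: eq_bigr => k _; rewrite rmorphM /=.
  transitivity ((d m * (A m k)%:~R) * (x 0 k)%:~R / d i); first by ring.
  rewrite dsym; ring.
apply: rpredB; first exact: Hi.
by apply: rpred_sum => k _; apply: rpredM; [exact: intr_int | exact: Hi].
Qed.

Lemma root_rootlike x : is_root A x -> rootlike x.
Proof.
move=> [w [i ->]]; elim: w => [|j w IH] /=; first exact: rootlike_sroot.
exact: rootlike_sref.
Qed.

Lemma rootlike_neq0 x : rootlike x -> x != 0.
Proof.
move=> [i [HB _]]; apply/eqP => Hx; move: HB; rewrite Hx.
have -> : toQ 0 = 0 by apply/matrixP => a b; rewrite !mxE.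
rewrite B0r => /eqP; rewrite eq_sym mulf_eq0 (negbTE (dneq0 i)) orbF.
by [].
Qed.


Lemma parity (v : 'I_n -> 'I_n -> rat) :
  (forall a b, v a b = v b a) -> (forall a b, v a b \is a Num.int) ->
  (forall a, v a a / 2 \is a Num.int) ->
  (\sum_(a : 'I_n) \sum_(b : 'I_n) v a b) / 2 \is a Num.int.
Proof.
move=> Hs Hi Hd.
have E : \sum_(a : 'I_n) \sum_(b : 'I_n) v a b =
  \sum_a v a a + 2 * \sum_(a : 'I_n) \sum_(b : 'I_n) ((a < b)%N%:R * v a b).
  have Ev : forall a b : 'I_n, v a b = (a < b)%N%:R * v a b + (a == b)%:R * v a b
     + (b < a)%N%:R * v a b.
    move=> a b; case: (ltngtP a b) => H.
    - have Hab : (a == b) = false by apply/eqP => E; rewrite E ltnn in H.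
      by rewrite Hab /=; ring.
    - have Hab : (a == b) = false by apply/eqP => E; rewrite E ltnn in H.
      by rewrite Hab /=; ring.
    - by rewrite (_ : a = b) ?eqxx ?ltnn /=; [ring | apply: val_inj].
  transitivity (\sum_(a : 'I_n) \sum_(b : 'I_n) ((a < b)%N%:R * v a b + (a == b)%:R * v a b
     + (b < a)%N%:R * v a b)).
    by apply: eq_bigr => a _; apply: eq_bigr => b _; rewrite -Ev.
  rewrite mulr2n mulrDl mul1r.
  under eq_bigr do rewrite !big_split /=.
  rewrite !big_split /=.
  have -> : \sum_(a : 'I_n) \sum_(b : 'I_n) (a == b)%:R * v a b = \sum_a v a a.
    apply: eq_bigr => a _; rewrite (bigD1 a) //= eqxx mul1r big1 ?addr0 //.
    by move=> b Hb; rewrite eq_sym (negbTE Hb) mul0r.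
  have -> : \sum_(a : 'I_n) \sum_(b : 'I_n) (b < a)%N%:R * v a b = \sum_(a : 'I_n) \sum_(b : 'I_n) (a < b)%N%:R * v a b.
    rewrite exchange_big /=; apply: eq_bigr => a _; apply: eq_bigr => b _.
    by rewrite Hs.
  ring.
rewrite E mulrDl mulrAC divff ?mul1r; last by rewrite pnatr_eq0.
apply: rpredD; first by rewrite mulr_suml; apply: rpred_sum => a _; exact: Hd.
apply: rpred_sum => a _; apply: rpred_sum => b _; apply: rpredM => //.
by case: (a < b)%N; rewrite ?int_num1 ?int_num0.
Qed.

Lemma int_pos_ge1 (x : rat) : x \is a Num.int -> 0 < x -> 1 <= x.
Proof. by move=> /intrP[m ->]; rewrite ltr0z ler1z. Qed.

Lemma evenB (y : 'rV[rat]_n) i : y != 0 -> (forall j, 0 <= y 0 j) ->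
  (forall j, y 0 j \is a Num.int) -> (forall j, y 0 j * d j / d i \is a Num.int) ->
  2 * d i <= B y y.
Proof.
move=> Hy Hp Hi Hu.
pose u j := y 0 j * d j / d i.
pose N := \sum_(a : 'I_n) \sum_(b : 'I_n) u a * (A a b)%:~R * y 0 b.
have EB : B y y = d i * N.
  rewrite Bsum /N mulr_sumr; apply: eq_bigr => a _; rewrite mulr_sumr.
  apply: eq_bigr => b _; rewrite /u; field; exact: dneq0.
have HN : N / 2 \is a Num.int.
  apply: parity.
  - move=> a b; rewrite /u.
    transitivity ((d a * (A a b)%:~R) * y 0 a * y 0 b / d i); first by ring.
    rewrite dsym; ring.
  - move=> a b; apply: rpredM; [apply: rpredM; [exact: Hu | exact: intr_int] | exact: Hi].
  - move=> a; rewrite HAd.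
    rewrite (_ : u a * (2:int)%:~R * y 0 a / 2 = u a * y 0 a).
      by apply: rpredM; [exact: Hu | exact: Hi].
    by field.
have Npos : 0 < N.
  have := posdef Hy; rewrite -Bsum EB => H.
  by rewrite -(pmulr_rgt0 _ (dpos i)).
have := int_pos_ge1 HN (divr_gt0 Npos (ltr0Sn _ 1)).
rewrite ler_pdivlMr // mul1r => H2.
by rewrite EB [d i * N]mulrC ler_pM2r ?dpos.
Qed.

Lemma maxE0 (t : rat) : Num.max t 0 = if 0 <= t then t else 0.
Proof. by case: ifP => H; [rewrite max_l | rewrite max_r // ltW // ltNge H]. Qed.

Lemma maxM0 (t s : rat) : 0 < s -> Num.max t 0 * s = Num.max (t * s) 0.
Proof.
move=> Hs; rewrite !maxE0 pmulr_lge0 //; by case: ifP; rewrite ?mul0r.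
Qed.

Lemma max_int (t : rat) : t \is a Num.int -> Num.max t 0 \is a Num.int.
Proof. by move=> Ht; rewrite maxE0; case: ifP; rewrite ?int_num0. Qed.

Lemma max_ge0 (t : rat) : 0 <= Num.max t 0.
Proof. by rewrite le_max lexx orbT. Qed.

Lemma coherent x : rootlike x -> (forall j, 0 <= x 0 j) \/ (forall j, x 0 j <= 0).
Proof.
move=> [i [HB Hint]].
case: (boolP [exists j, x 0 j < 0]) => [Hneg|]; last first.
  by move=> /existsPn H; left => j; rewrite leNgt; exact: H.
case: (boolP [exists j, 0 < x 0 j]) => [Hpos|]; last first.
  by move=> /existsPn H; right => j; rewrite leNgt; exact: H.
exfalso.
pose P : 'rV[rat]_n := \row_j Num.max ((x 0 j)%:~R : rat) 0.
pose Q : 'rV[rat]_n := \row_j Num.max (- (x 0 j)%:~R : rat) 0.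
have EP : toQ x = P - Q.
  apply/matrixP => a b; rewrite (ord1 a) !mxE !maxE0 oppr_ge0.
  case: ifP => H.
    case: ifP => H2; last by rewrite subr0.
    by have -> : ((x 0 b)%:~R : rat) = 0 by apply/eqP; rewrite eq_le H H2.
  have H2 : ((x 0 b)%:~R : rat) <= 0 by rewrite ltW // ltNge H.
  by rewrite H2 sub0r opprK.
have BPQ : B P Q <= 0.
  rewrite Bsum; apply: sumr_le0 => a _; apply: sumr_le0 => b _.
  rewrite !mxE; have [<-|Hab] := eqVneq a b.
    rewrite !maxE0 oppr_ge0; case: ifP => H; last by rewrite !mul0r.
    case: ifP => H2; last by rewrite mulr0.
    have -> : ((x 0 a)%:~R : rat) = 0 by apply/eqP; rewrite eq_le H H2.
    by rewrite !mul0r.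
  rewrite -mulrA mulr_ge0_le0 //; first exact: max_ge0.
  apply: mulr_le0_ge0; last exact: max_ge0.
  rewrite pmulr_rle0 ?dpos // lerz0; exact: Aoff.
have HP : forall j, P 0 j * d j / d i \is a Num.int.
  by move=> j; rewrite mxE -mulrA maxM0 ?mulrA ?max_int ?divr_gt0 ?dpos.
have HQ : forall j, Q 0 j * d j / d i \is a Num.int.
  move=> j; rewrite mxE -mulrA maxM0 ?divr_gt0 ?dpos // mulNr mulrA max_int //.
  by rewrite rpredN.
have BPP : 2 * d i <= B P P.
  apply: evenB => //.
  - case/existsP: Hpos => j Hj; apply/eqP => /matrixP /(_ 0 j); rewrite !mxE.
    by rewrite max_l ?ltr0z ?ler0z ?(ltW Hj) //; apply/eqP; rewrite gt_eqF ?ltr0z.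
  - by move=> j; rewrite mxE max_ge0.
  - by move=> j; rewrite mxE max_int // intr_int.
have BQQ : 2 * d i <= B Q Q.
  apply: evenB => //.
  - case/existsP: Hneg => j Hj; apply/eqP => /matrixP /(_ 0 j) /eqP.
    by rewrite !mxE maxE0 oppr_ge0 lerz0 (ltW Hj) oppr_eq0 intr_eq0 (lt_eqF Hj).
  - by move=> j; rewrite mxE max_ge0.
  - by move=> j; rewrite mxE max_int // rpredN intr_int.
move: HB; rewrite EP BBl !BBr (BC Q P) => HB.
have : 4 * d i <= 2 * d i.
  rewrite -HB; have := dpos i; lra.
have := dpos i; lra.
Qed.

Lemma mult_sroot x j : rootlike x -> (forall k, k != j -> x 0 k = 0) ->
  0 <= x 0 j -> x = sroot j.
Proof.
move=> Hr Hk Hj; have Hnz := rootlike_neq0 Hr; move: Hr => [i [HB Hint]].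
set t := x 0 j in Hj.
have Ex : toQ x = (t%:~R) *: ev j.
  apply/matrixP => a b; rewrite (ord1 a) !mxE.
  case: (eqVneq b j) => [->|Hb]; first by rewrite eqxx mulr1.
  by rewrite mulr0 Hk.
have tnz : t != 0.
  apply: contra Hnz => /eqP Ht; apply/eqP/matrixP => a b; rewrite (ord1 a) mxE.
  by case: (eqVneq b j) => [->|Hb]; [exact: Ht | exact: Hk].
have tq : (t%:~R : rat) != 0 by rewrite intr_eq0.
rewrite Ex BZl BZr Bev coro_ev in HB.
have Hdi : d i = t%:~R ^+ 2 * d j.
  by apply: (@mulfI _ 2); [by [] | rewrite -HB; ring].
have := Hint j; rewrite -/t.
have -> : (t%:~R * d j / d i : rat) = 1 / t%:~R.
  rewrite Hdi; field; rewrite tq dneq0 //.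
move=> H1.
have tpos : (0 : rat) < t%:~R by rewrite ltr0z lt_def tnz Hj.
have := int_pos_ge1 H1 (divr_gt0 ltr01 tpos).
rewrite ler_pdivlMr // mul1r lerz1 => Ht1.
have t1 : t = 1 by lia.
apply/matrixP => a b; rewrite (ord1 a) !mxE /=.
case: (eqVneq b j) => [->|Hb]; first by rewrite -/t t1.
by rewrite Hk.
Qed.

Definition nonneg (x : 'rV[int]_n) := forall k, 0 <= x 0 k.

Lemma key x j : is_root A x -> nonneg x -> x != sroot j -> nonneg (sref A j x).
Proof.
move=> Hx Hp Hne.
have Hy : is_root A (sref A j x) by case: Hx => w [i ->]; exists (j :: w), i.
case: (coherent (root_rootlike Hy)) => // Hneg.
exfalso; move/negP: Hne; apply; apply/eqP.
apply: mult_sroot (root_rootlike Hx) _ (Hp j).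
move=> k Hk; apply/eqP; rewrite eq_le Hp andbT; have := Hneg k; by rewrite sref_out.
Qed.

Lemma pos_word w i : uniq w -> i \notin w ->
  is_root A (wact A w (sroot i)) /\ nonneg (wact A w (sroot i)).
Proof.
elim: w => [|j w IH] /=.
  split; first by exists [::], i.
  by move=> k; rewrite /sroot mxE; case: (_ && _).
move=> /andP[Hjw Hu]; rewrite in_cons negb_or => /andP[Hij Hiw].
have [Hr Hn] := IH Hu Hiw.
split; first by case: Hr => w' [i' ->]; exists (j :: w'), i'.
apply: key => //; apply/eqP => /matrixP /(_ 0 j).
rewrite wact_out // /sroot !mxE !eqxx /=.
by rewrite eq_sym (negbTE Hij).
Qed.

Lemma split_ex (s : seq 'I_n) x : x \in s -> exists l1 l2, s = l1 ++ x :: l2.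
Proof. by case/splitPr => l1 l2; exists l1, l2. Qed.

Lemma beta_formula (s : seq 'I_n) l1 l2 i : uniq s -> s = l1 ++ i :: l2 ->
  beta A s i = wact A (rev l2) (sroot i) /\ beta A (rev s) i = wact A l1 (sroot i).
Proof.
move=> Hu Hs; rewrite Hs in Hu; rewrite Hs.
move: Hu; rewrite cat_uniq /= => /and3P[_ Hi1 /andP[Hi2 _]].
have Hi1' : i \notin l1.
  by apply: contra Hi1 => H; rewrite /= H.
split.
  rewrite /beta index_cat (negbTE Hi1') /= eqxx addn0 drop_cat ltnNge leqnSn /= subSnn.
  by rewrite /= drop0.
rewrite /beta rev_cat rev_cons -cats1 -catA /= index_cat mem_rev (negbTE Hi2) /= eqxx addn0.
by rewrite size_rev drop_cat size_rev ltnNge leqnSn /= subSnn /= drop0 revK.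
Qed.

Lemma split_info (s l1 l2 : seq 'I_n) i : uniq s -> s = l1 ++ i :: l2 ->
  [/\ uniq l1, uniq l2, i \notin l1 & i \notin l2].
Proof.
move=> Hu Hs; rewrite Hs cat_uniq /= in Hu.
move: Hu => /and3P[H1 Hi1 /andP[Hi2 H2]]; split => //.
by apply: contra Hi1 => H; rewrite /= H.
Qed.

Lemma sref_sroot i : sref A i (sroot i) = - sroot i.
Proof.
have Hc : cz (sroot i) i = 2.
  rewrite /cz; under eq_bigr do rewrite /sroot mxE /=. by rewrite sum_delta HAd.
apply/matrixP => a b; rewrite (ord1 a) srefE Hc /sroot !mxE /=.
by case: (b == i) => /=; ring.
Qed.

Lemma bt_pos i : is_root A (beta A l i) /\ nonneg (beta A l i).
Proof.
have [l1 [l2 E]] := split_ex (hl i); have [H1 H2 Hi1 Hi2] := split_info ul E.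
have [-> _] := beta_formula ul E.
by apply: pos_word; rewrite ?rev_uniq ?mem_rev.
Qed.

Lemma bt'_pos i : is_root A (beta A (rev l) i) /\ nonneg (beta A (rev l) i).
Proof.
have [l1 [l2 E]] := split_ex (hl i); have [H1 H2 Hi1 Hi2] := split_info ul E.
have [_ ->] := beta_formula ul E.
exact: pos_word.
Qed.

Lemma c_bt i : wact A l (beta A l i) = - beta A (rev l) i.
Proof.
have [l1 [l2 E]] := split_ex (hl i); have [-> ->] := beta_formula ul E.
rewrite {1}E wact_cat /= wactK_rev sref_sroot wact_neg //.
Qed.

Lemma c'_bt' i : wact A (rev l) (beta A (rev l) i) = - beta A l i.
Proof.
have [l1 [l2 E]] := split_ex (hl i); have [-> ->] := beta_formula ul E.
rewrite {1}E rev_cat rev_cons -cats1 -catA wact_cat /= wact_revK sref_sroot wact_neg //.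
Qed.

Lemma F1 a : is_root A a -> nonneg a -> (forall j, a <> beta A l j) ->
  nonneg (wact A l a).
Proof.
move=> Hr Hn Hb.
suff : forall s p, l = p ++ s -> is_root A (wact A s a) /\ nonneg (wact A s a).
  by move=> /(_ l [::] erefl) [].
elim=> [|j s IH] p E /=; first by [].
have E' : l = rcons p j ++ s by rewrite cat_rcons.
have [Hr' Hn'] := IH _ E'.
split; first by case: Hr' => w [i ->]; exists (j :: w), i.
apply: key => //; apply/eqP => Hs.
apply: (Hb j); rewrite -(wact_revK s a) Hs.
by have [-> _] := beta_formula ul E.
Qed.



Lemma pos_ne_neg a b : nonneg a -> nonneg b -> a != 0 -> a <> - b.
Proof.
move=> Ha Hb Hnz E; move/eqP: Hnz; apply; apply/matrixP => x y; rewrite (ord1 x) mxE.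
apply/eqP; rewrite eq_le Ha andbT; have := Hb y; rewrite -[b]opprK -E mxE.
by rewrite oppr_ge0.
Qed.

Lemma root_neq0 x : is_root A x -> x != 0.
Proof. by move=> H; apply: rootlike_neq0; apply: root_rootlike. Qed.

Lemma bt_inj_rev i j : beta A l i = beta A l j -> beta A (rev l) i = beta A (rev l) j.
Proof. by move=> E; apply: oppr_inj; rewrite -!c_bt E. Qed.

Lemma bar_nbt i : bar A l (- beta A l i) = - beta A (rev l) i.
Proof.
rewrite /bar; case: pickP => [j /eqP E|H]; last by have := H i; rewrite eqxx.
by rewrite (bt_inj_rev (oppr_inj E)).
Qed.

Lemma bar_pos a : is_pos_root A a -> bar A l a = a.
Proof.
move=> [Hr Hn]; rewrite /bar; case: pickP => [j /eqP E|//].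
have [Hr' Hn'] := bt_pos j.
by exfalso; apply: (pos_ne_neg Hn Hn' (root_neq0 Hr) E).
Qed.

Lemma tau_bt i : tau A l (beta A l i) = - beta A l i.
Proof.
rewrite /tau; case: pickP => [j /eqP E|H]; last by have := H i; rewrite eqxx.
by rewrite E.
Qed.

Lemma tau'_bt' i : tau A (rev l) (beta A (rev l) i) = - beta A (rev l) i.
Proof.
rewrite /tau; case: pickP => [j /eqP E|H]; last by have := H i; rewrite eqxx.
by rewrite E.
Qed.

Lemma tau_nbt i : tau A l (- beta A l i) = beta A (rev l) i.
Proof.
rewrite /tau; case: pickP => [j /eqP E|_].
  have [Hr Hn] := bt_pos j; have [Hr' Hn'] := bt_pos i.
  exfalso; apply: (pos_ne_neg Hn Hn' (root_neq0 Hr)); by rewrite -E.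
by rewrite /cox wact_neg c_bt opprK.
Qed.

Lemma tau'_nbt' i : tau A (rev l) (- beta A (rev l) i) = beta A l i.
Proof.
rewrite /tau; case: pickP => [j /eqP E|_].
  have [Hr Hn] := bt'_pos j; have [Hr' Hn'] := bt'_pos i.
  exfalso; apply: (pos_ne_neg Hn Hn' (root_neq0 Hr)); by rewrite -E.
by rewrite /cox wact_neg c'_bt' opprK.
Qed.

Lemma pos_wact a w : is_root A a -> is_root A (wact A w a).
Proof. by case=> w' [i ->]; exists (w ++ w'), i; rewrite wact_cat. Qed.

Lemma bar_mem x : in_Phi_ap A l x -> in_Phi_ap A (rev l) (bar A l x).
Proof.
case=> [Hp|[i ->]]; first by rewrite bar_pos //; left.
by rewrite bar_nbt; right; exists i.
Qed.

Lemma tau_mem x : in_Phi_ap A l x -> in_Phi_ap A l (tau A l x).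
Proof.
case=> [[Hr Hn]|[i ->]]; last by rewrite tau_nbt; left; exact: bt'_pos.
case: (pickP (fun j => x == beta A l j)) => [j /eqP E|H].
  by rewrite E tau_bt; right; exists j.
have Hb : forall j, x <> beta A l j by move=> j E; have := H j; rewrite E eqxx.
rewrite /tau; case: pickP => [j /eqP E|_]; first by exfalso; exact: (Hb j).
left; split; [exact: pos_wact | exact: F1].
Qed.

Lemma K x : in_Phi_ap A l x ->
  tau A (rev l) (bar A l (tau A l x)) = bar A l x.
Proof.
case=> [[Hr Hn]|[i ->]]; last first.
  rewrite tau_nbt bar_pos ?tau'_bt' ?bar_nbt //; exact: bt'_pos.
case: (pickP (fun j => x == beta A l j)) => [j /eqP E|H].
  rewrite E tau_bt bar_nbt tau'_nbt' bar_pos //; exact: bt_pos.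
have Hb : forall j, x <> beta A l j by move=> j E; have := H j; rewrite E eqxx.
have Ht : tau A l x = wact A l x.
  rewrite /tau; case: pickP => [j /eqP E|_] //; by exfalso; exact: (Hb j).
have Hcp : is_pos_root A (wact A l x) by split; [exact: pos_wact | exact: F1].
have Hxp : is_pos_root A x by split.
rewrite Ht (bar_pos Hcp) (bar_pos Hxp).
rewrite /tau; case: pickP => [j /eqP E|_]; last by rewrite /cox wact_revK.
exfalso; have [Hr' Hn'] := bt_pos j.
apply: (pos_ne_neg Hn Hn' (root_neq0 Hr)).
by rewrite -c'_bt' -E wact_revK.
Qed.

Lemma orbit_reach a : is_pos_root A a ->
  exists k i, iter k (tau A l) a = - beta A l i.
Proof.
move=> [Hr Hn]; case: (classic (exists k i, iter k (tau A l) a = - beta A l i)) => // H0.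
exfalso.
have H : forall k i, iter k (tau A l) a <> - beta A l i.
  by move=> k i E; apply: H0; exists k, i.
have Hall : forall m, iter m (tau A l) a = iter m (wact A l) a /\
   is_pos_root A (iter m (wact A l) a).
  elim=> [|m [IH1 [IHr IHn]]] //=.
  case: (pickP (fun j => iter m (wact A l) a == beta A l j)) => [j /eqP E|Hp].
    exfalso; apply: (H m.+1 j); by rewrite /= IH1 E tau_bt.
  have Hb : forall j, iter m (wact A l) a <> beta A l j.
    by move=> j E; have := Hp j; rewrite E eqxx.
  have Ht : tau A l (iter m (wact A l) a) = wact A l (iter m (wact A l) a).
    rewrite /tau; case: pickP => [j /eqP E|_] //; by exfalso; exact: (Hb j).
  rewrite IH1 Ht; split => //; split; [exact: pos_wact | exact: F1].
apply: (orbit_bound (root_neq0 Hr)) => m j.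
by have [_ [_ ->]] := Hall m.
Qed.

Lemma posp0 x : x <= 0 -> posp x = 0.
Proof. by move=> H; rewrite /posp max_r. Qed.

Lemma main_sec (f g : 'rV[int]_n -> 'rV[int]_n -> int) :
  is_pairing_c A l f -> is_pairing_c A (rev l) g ->
  forall a b, in_Phi_ap A l a -> in_Phi_ap A l b -> f a b = g (bar A l a) (bar A l b).
Proof.
move=> [finv fb] [ginv gb].
pose P a := forall b, in_Phi_ap A l b -> f a b = g (bar A l a) (bar A l b).
have base : forall i, P (- beta A l i).
  move=> i b Hb; rewrite fb // bar_nbt gb; last exact: bar_mem.
  case: Hb => [Hp|[j ->]]; first by rewrite bar_pos.
  rewrite bar_nbt /coef !mxE !posp0 // oppr_le0; [exact: (bt'_pos j).2 | exact: (bt_pos j).2].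
have step : forall a, in_Phi_ap A l a -> P (tau A l a) -> P a.
  move=> a Ha IH b Hb.
  rewrite -finv // IH; last exact: tau_mem.
  rewrite -ginv; try by apply: bar_mem; apply: tau_mem.
  by rewrite !K.
move=> a b Ha; move: b; rewrite -/(P a).
case: (Ha) => [Hp|[i ->]]; last exact: base.
have [k [i E]] := orbit_reach Hp.
elim: k a Ha E {Hp} => [|k IH] a Ha /= E; first by rewrite E; exact: base.
apply: step => //; apply: IH; first exact: tau_mem.
by rewrite -iterSr.
Qed.

End IntLayer.

Unset Implicit Arguments.
Set Strict Implicit.

Theorem proposition3p4 (n : nat) (A : 'M[int]_n) (l : seq 'I_n)
  (f g : 'rV[int]_n -> 'rV[int]_n -> int) :
  finite_type_cartan A ->
  coxeter_word l ->
  is_pairing_c A l f ->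
  is_pairing_c A (rev l) g ->
  forall a b : 'rV[int]_n,
    in_Phi_ap A l a -> in_Phi_ap A l b ->
    f a b = g (bar A l a) (bar A l b).
Proof.
move=> [[HAd [Aoff _]] [d [dpos [dsym posdef]]]] Hl.
have ul : uniq l by rewrite (perm_uniq Hl) enum_uniq.
have hl : forall i, i \in l by move=> i; rewrite (perm_mem Hl) mem_enum.
exact: (main_sec HAd dpos dsym Aoff posdef ul hl).
Qed.
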